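(* Under the hypotheses and notation of the context, the limit $\bar\Psi(+\infty)=\lim_{t\to+\infty}\bar\Psi(t)$ exists and $$\bar\Psi(+\infty)\in\Big\{0,\ -\tfrac{p-1}{2(p+1)}(k^2+l^2)\sigma_0^{\frac{p+1}{p-1}}\Big\},$$ where $k,l\ge0$ are not both $0$ and satisfy $\mu_1k^{2q}+\beta k^{q-1}l^{q+1}=1$, $\mu_2l^{2q}+\beta l^{q-1}k^{q+1}=1$ (if one of $k,l$ is $0$, say $k=0$, this is understood as $\mu_2l^{2q}=1$, and symmetrically).
   Context: Let $n\ge3$, $\mu_1,\mu_2,\beta>0$, $p=2q+1$ with $\frac{n}{n-2}<p<\frac{n+2}{n-2}$, and $(u,v)$ a nonnegative radial $C^2(\mathbb{R}^n\setminus\{0\})$ solution of $-\Delta u=\mu_1u^{2q+1}+\beta u^qv^{q+1}$, $-\Delta v=\mu_2v^{2q+1}+\beta v^qu^{q+1}$ in $\mathbb{R}^n\setminus\{0\}$. $\bar u(x)=|x|^{2-n}u(x/|x|^2)$, $\bar v(x)=|x|^{2-n}v(x/|x|^2)$, $\alpha=p(n-2)-(n+2)$, $\delta_0=\frac{2+\alpha}{p-1}$, $\bar w_1(t)=e^{-\delta_0t}\bar u(e^{-t})$, $\bar w_2(t)=e^{-\delta_0t}\bar v(e^{-t})$, $\sigma_0=\frac{(2+\alpha)(n-2)}{(p-1)^2}\big(p-\frac{n+\alpha}{n-2}\big)$, and $$\bar\Psi(t)=\tfrac12\big(|\bar w_1'|^2+|\bar w_2'|^2-\sigma_0(\bar w_1^2+\bar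 w_2^2)\big)+\tfrac1{p+1}\big(\mu_1\bar w_1^{p+1}+2\beta\bar w_1^{q+1}\bar w_2^{q+1}+\mu_2\bar w_2^{p+1}\big).$$ *)

(* Defs.v *)
From Stdlib Require Import Reals Lra.
Open Scope R_scope.

(* Real power of a nonnegative base (used with positive exponents only):
   0^a := 0, x^a := Rpower x a for x > 0. *)
Definition rpow (x a : R) : R := if Rle_dec x 0 then 0 else Rpower x a.

Definition alpha (n : nat) (p : R) : R := p * (INR n - 2) - (INR n + 2).
Definition delta0 (n : nat) (p : R) : R := (2 + alpha n p) / (p - 1).
Definition sigma0 (n : nat) (p : R) : R :=
  (2 + alpha n p) * (INR n - 2) / (p - 1) ^ 2
  * (p - (INR n + alpha n p) / (INR n - 2)).

(* Radial profile of the Kelvin transform  ubar(x) = |x|^{2-n} u(x/|x|^2):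
   if u(x) = U(|x|) then ubar(x) = Ubar(|x|) with Ubar(r) = r^{2-n} U(1/r). *)
Definition kelvin_profile (n : nat) (U : R -> R) (r : R) : R :=
  Rpower r (2 - INR n) * U (/ r).

Definition wbar (n : nat) (p : R) (U : R -> R) (t : R) : R :=
  exp (- delta0 n p * t) * kelvin_profile n U (exp (- t)).

Definition Psibar (n : nat) (p q mu1 mu2 beta : R) (w1 w2 dw1 dw2 : R -> R)
  (t : R) : R :=
  / 2 * ((dw1 t) ^ 2 + (dw2 t) ^ 2 - sigma0 n p * ((w1 t) ^ 2 + (w2 t) ^ 2))
  + / (p + 1) * (mu1 * rpow (w1 t) (p + 1)
                 + 2 * beta * rpow (w1 t) (q + 1) * rpow (w2 t) (q + 1)
                 + mu2 * rpow (w2 t) (p + 1)).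

Definition lim_pinfty (f : R -> R) (L : R) : Prop :=
  forall eps, 0 < eps -> exists T, forall t, T <= t -> Rabs (f t - L) < eps.

Definition kl_admissible (q mu1 mu2 beta k l : R) : Prop :=
  (0 < k /\ 0 < l /\
     mu1 * Rpower k (2 * q) + beta * Rpower k (q - 1) * Rpower l (q + 1) = 1 /\
     mu2 * Rpower l (2 * q) + beta * Rpower l (q - 1) * Rpower k (q + 1) = 1)
  \/ (k = 0 /\ 0 < l /\ mu2 * Rpower l (2 * q) = 1)
  \/ (l = 0 /\ 0 < k /\ mu1 * Rpower k (2 * q) = 1).

(* Main.v *)
Require Import Defs.
From Stdlib Require Import Reals Lra Lia Classical FunctionalExtensionality IndefiniteDescription ZArith.
Open Scope R_scope.

Lemma dext f x l l' : derivable_pt_lim f x l -> l = l' -> derivable_pt_lim f x l'.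
Proof. intros H ->; exact H. Qed.
Lemma dmul f g x df dg : derivable_pt_lim f x df -> derivable_pt_lim g x dg ->
  derivable_pt_lim (fun y => f y * g y) x (df * g x + f x * dg).
Proof. intros; now apply (derivable_pt_lim_mult f g). Qed.
Lemma dplus f g x df dg : derivable_pt_lim f x df -> derivable_pt_lim g x dg ->
  derivable_pt_lim (fun y => f y + g y) x (df + dg).
Proof. intros; now apply (derivable_pt_lim_plus f g). Qed.
Lemma dminus f g x df dg : derivable_pt_lim f x df -> derivable_pt_lim g x dg ->
  derivable_pt_lim (fun y => f y - g y) x (df - dg).
Proof. intros; now apply (derivable_pt_lim_minus f g). Qed.
Lemma dconst c x : derivable_pt_lim (fun _ => c) x 0.
Proof. apply (derivable_pt_lim_const c). Qed.
Lemma did x : derivable_pt_lim (fun y => y) x 1.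
Proof. apply derivable_pt_lim_id. Qed.
Lemma dscal c f x df : derivable_pt_lim f x df ->
  derivable_pt_lim (fun y => c * f y) x (c * df).
Proof. intros; now apply (derivable_pt_lim_scal f). Qed.
Lemma dcomp f g x df dg : derivable_pt_lim g x dg -> derivable_pt_lim f (g x) df ->
  derivable_pt_lim (fun y => f (g y)) x (df * dg).
Proof. intros H1 H2; exact (derivable_pt_lim_comp g f x dg df H1 H2). Qed.
Lemma dexp f x df : derivable_pt_lim f x df ->
  derivable_pt_lim (fun y => exp (f y)) x (exp (f x) * df).
Proof. intros H; apply (dcomp exp f); auto. apply derivable_pt_lim_exp. Qed.
Lemma dsq f x df : derivable_pt_lim f x df ->
  derivable_pt_lim (fun y => (f y) ^ 2) x (2 * f x * df).
Proof. intros H. eapply dext. apply (dcomp (fun y => y ^ 2) f). exact H.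
  apply derivable_pt_lim_pow. simpl; ring. Qed.

Lemma dlocal f g x l d : 0 < d -> (forall y, Rabs (y - x) < d -> f y = g y) ->
  derivable_pt_lim g x l -> derivable_pt_lim f x l.
Proof.
  intros Hd Hfg Hg eps Heps. destruct (Hg eps Heps) as [del Hdel].
  assert (Hm : 0 < Rmin del d) by (apply Rmin_pos; [apply cond_pos|lra]).
  exists (mkposreal _ Hm). intros h Hh0 Hh. simpl in Hh.
  rewrite (Hfg (x+h)), (Hfg x).
  - apply Hdel; auto. apply Rlt_le_trans with (1 := Hh), Rmin_l.
  - rewrite Rminus_diag, Rabs_R0; lra.
  - replace (x + h - x) with h by ring. apply Rlt_le_trans with (1 := Hh), Rmin_r.
Qed.

Lemma cont_eps f x0 : continuity_pt f x0 ->
  forall eps, 0 < eps -> exists eta, 0 < eta /\ forall x, Rabs (x - x0) < eta -> Rabs (f x - f x0) < eps.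
Proof.
  intros H eps He. destruct (H eps He) as [al [Hal Hx]]. exists al; split; auto.
  intros x Hx'. destruct (Req_dec x0 x) as [<-|Hne].
  - rewrite Rminus_diag, Rabs_R0; lra.
  - apply (Hx x). split; [split; [exact I|exact Hne]| exact Hx'].
Qed.

Lemma dcont f x l : derivable_pt_lim f x l -> continuity_pt f x.
Proof. intros H. apply derivable_continuous_pt. exists l; exact H. Qed.

Lemma rpow_pos x a : 0 < x -> rpow x a = Rpower x a.
Proof. intros H; unfold rpow; destruct (Rle_dec x 0); [lra|auto]. Qed.
Lemma rpow_npos x a : x <= 0 -> rpow x a = 0.
Proof. intros H; unfold rpow; destruct (Rle_dec x 0); [auto|lra]. Qed.
Lemma Rpower_gt0 x a : 0 < Rpower x a.
Proof. unfold Rpower; apply exp_pos. Qed.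
Lemma rpow_ge0 x a : 0 <= rpow x a.
Proof. unfold rpow; destruct (Rle_dec x 0); [lra|left; apply Rpower_gt0]. Qed.
Lemma rpow_gt0 x a : 0 < x -> 0 < rpow x a.
Proof. intros H; rewrite rpow_pos; auto; apply Rpower_gt0. Qed.
Lemma rpow_0 a : rpow 0 a = 0.
Proof. apply rpow_npos; lra. Qed.
Lemma rpow_mult c x a : 0 < c -> rpow (c * x) a = Rpower c a * rpow x a.
Proof.
  intros Hc. destruct (Rle_dec x 0) as [Hx|Hx].
  - rewrite !rpow_npos; try lra. nra.
  - rewrite !rpow_pos; try lra. rewrite Rpower_mult_distr; auto; lra.
    apply Rmult_lt_0_compat; lra.
Qed.
Lemma rpow_le x z a : 0 <= a -> x <= z -> rpow x a <= rpow z a.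
Proof.
  intros Ha Hxz. destruct (Rle_dec x 0) as [Hx|Hx].
  - rewrite rpow_npos; auto; apply rpow_ge0.
  - rewrite !rpow_pos; try lra. apply Rle_Rpower_l; lra.
Qed.
Lemma rpow_lt x z a : 0 < a -> 0 <= x -> x < z -> rpow x a < rpow z a.
Proof.
  intros Ha H0 Hxz. destruct (Rle_dec x 0) as [Hx|Hx].
  - rewrite rpow_npos; auto; apply rpow_gt0; lra.
  - rewrite !rpow_pos; try lra. apply Rlt_Rpower_l; lra.
Qed.
Lemma rpow_succ x a : 0 <= x -> rpow x (a + 1) = x * rpow x a.
Proof.
  intros Hx. destruct (Req_dec x 0) as [->|Hx0].
  - rewrite !rpow_0; ring.
  - rewrite !rpow_pos; try lra. rewrite Rpower_plus, Rpower_1; lra.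
Qed.
Lemma rpow_1 x : 0 <= x -> rpow x 1 = x.
Proof.
  intros Hx. destruct (Req_dec x 0) as [->|Hx0].
  - apply rpow_0.
  - rewrite rpow_pos, Rpower_1; lra.
Qed.

Lemma Rpower_small e a : 0 < e -> 0 < a ->
  forall x, 0 < x -> x < Rpower e (/ a) -> Rpower x a < e.
Proof.
  intros He Ha x Hx Hlt.
  replace e with (Rpower (Rpower e (/a)) a).
  - apply Rlt_Rpower_l; auto.
  - rewrite Rpower_mult, Rinv_l, Rpower_1; lra.
Qed.

Lemma rpow_cont a x0 : 0 < a ->
  forall eps, 0 < eps -> exists eta, 0 < eta /\
    forall x, Rabs (x - x0) < eta -> Rabs (rpow x a - rpow x0 a) < eps.
Proof.
  intros Ha eps He.
  destruct (Rtotal_order x0 0) as [Hn|[Hz|Hp]].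
  - exists (- x0); split; [lra|]. intros x Hx.
    rewrite !rpow_npos; try lra. rewrite Rminus_diag, Rabs_R0; lra.
    apply Rabs_def2 in Hx; lra.
  - subst. exists (Rpower eps (/a)); split; [apply Rpower_gt0|].
    intros x Hx. rewrite Rminus_0_r in Hx. rewrite rpow_0, Rminus_0_r.
    destruct (Rle_dec x 0). rewrite rpow_npos, Rabs_R0; lra.
    rewrite rpow_pos, Rabs_pos_eq; try lra. apply Rpower_small; auto; try lra.
    apply Rabs_def2 in Hx; lra. left; apply Rpower_gt0.
  - assert (Hc := dcont _ _ _ (derivable_pt_lim_power x0 a Hp)).
    destruct (cont_eps _ _ Hc eps He) as [e1 [He1 H1]].
    exists (Rmin e1 x0); split. apply Rmin_pos; lra.
    intros x Hx. assert (Hx1 := Rlt_le_trans _ _ _ Hx (Rmin_l _ _)).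
    assert (Hx2 := Rlt_le_trans _ _ _ Hx (Rmin_r _ _)).
    apply Rabs_def2 in Hx2. rewrite !rpow_pos; try lra. apply H1; auto.
Qed.

Lemma rpow_deriv b x : 1 < b -> derivable_pt_lim (fun y => rpow y b) x (b * rpow x (b - 1)).
Proof.
  intros Hb. destruct (Rtotal_order x 0) as [Hn|[Hz|Hp]].
  - apply (dlocal _ (fun _ => 0) _ _ (- x)); [lra| |].
    + intros y Hy; apply Rabs_def2 in Hy; apply rpow_npos; lra.
    + rewrite rpow_npos; [|lra]. rewrite Rmult_0_r. apply dconst.
  - subst. rewrite rpow_0, Rmult_0_r. intros eps He.
    assert (Hb1 : 0 < b - 1) by lra.
    exists (mkposreal _ (Rpower_gt0 eps (/ (b - 1)))). intros h Hh0 Hh. simpl in Hh.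
    rewrite Rplus_0_l, rpow_0, Rminus_0_r, Rminus_0_r.
    destruct (Rle_dec h 0).
    + rewrite rpow_npos; auto. unfold Rdiv; rewrite Rmult_0_l, Rabs_R0; lra.
    + rewrite rpow_pos; [|lra].
      replace (Rpower h b / h) with (Rpower h (b - 1)).
      * rewrite Rabs_pos_eq; [|left; apply Rpower_gt0]. apply Rpower_small; auto; try lra.
        rewrite Rabs_pos_eq in Hh; lra.
      * replace b with ((b - 1) + 1) at 2 by ring. rewrite Rpower_plus, Rpower_1; [|lra].
        field; lra.
  - apply (dlocal _ (fun y => Rpower y b) _ _ x); [lra| |].
    + intros y Hy; apply Rabs_def2 in Hy; apply rpow_pos; lra.
    + rewrite rpow_pos; auto. apply derivable_pt_lim_power; auto.
Qed.

Lemma mvt_le f f' a b : a <= b -> (forall c, a <= c <= b -> derivable_pt_lim f c (f' c)) ->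
  (forall c, a <= c <= b -> f' c <= 0) -> f b <= f a.
Proof.
  intros Hab Hd Hs. destruct (Req_dec a b) as [->|Hne]; [lra|].
  destruct (MVT_cor2 f f' a b) as [c [Hc Hc']]; try lra; auto.
  assert (f' c <= 0) by (apply Hs; lra). assert (f' c * (b - a) <= 0) by nra.
  lra.
Qed.
Lemma mvt_ge f f' a b : a <= b -> (forall c, a <= c <= b -> derivable_pt_lim f c (f' c)) ->
  (forall c, a <= c <= b -> 0 <= f' c) -> f a <= f b.
Proof.
  intros Hab Hd Hs.
  assert (H := mvt_le (fun x => - f x) (fun x => - f' x) a b Hab).
  assert (- f b <= - f a); [|lra]. apply H.
  intros c Hc. apply derivable_pt_lim_opp; auto. intros c Hc; specialize (Hs c Hc); lra.
Qed.
Lemma mvt_bound f f' a b M : a <= b -> (forall c, a <= c <= b -> derivable_pt_lim f c (f' c)) ->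
  (forall c, a <= c <= b -> Rabs (f' c) <= M) -> Rabs (f b - f a) <= M * (b - a).
Proof.
  intros Hab Hd Hs. destruct (Req_dec a b) as [->|Hne].
  rewrite Rminus_diag, Rabs_R0; lra.
  destruct (MVT_cor2 f f' a b) as [c [Hc Hc']]; try lra; auto.
  rewrite Hc, Rabs_mult, (Rabs_pos_eq (b - a)); [|lra].
  apply Rmult_le_compat_r; [lra|]. apply Hs; lra.
Qed.

Lemma abs_le_inv x b : Rabs x <= b -> - b <= x <= b.
Proof. unfold Rabs; destruct (Rcase_abs x); intros; lra. Qed.
Lemma abs_lt_inv x b : Rabs x < b -> - b < x < b.
Proof. unfold Rabs; destruct (Rcase_abs x); intros; lra. Qed.
Lemma abs_lt x b : - b < x < b -> Rabs x < b.
Proof. unfold Rabs; destruct (Rcase_abs x); intros; lra. Qed.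


Definition Wf (q : R) (U : R -> R) (t : R) : R := exp (/ q * t) * U (exp t).
Definition Df (q : R) (U dU : R -> R) (t : R) : R :=
  exp (/ q * t) * (/ q * U (exp t) + exp t * dU (exp t)).
Definition F1 (q mu beta x y : R) : R :=
  mu * rpow x (2 * q + 1) + beta * rpow x q * rpow y (q + 1).
Definition aa (n : nat) (q : R) : R := INR n - 2 - 2 / q.
Definition sg (n : nat) (q : R) : R := / q * (INR n - 2 - / q).

Lemma sigma_eq n q : 0 < q -> (3 <= n)%nat -> sigma0 n (2 * q + 1) = sg n q.
Proof.
  intros Hq Hn. assert (Hn' : 3 <= INR n) by (replace 3 with (INR 3) by (simpl; ring); apply le_INR; auto).
  unfold sigma0, sg, alpha. field. split; lra.
Qed.

Lemma wbar_eq n q U : 0 < q -> wbar n (2 * q + 1) U = Wf q U.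
Proof.
  intros Hq. apply functional_extensionality; intros t.
  unfold wbar, Wf, kelvin_profile, delta0, alpha, Rpower.
  rewrite ln_exp. rewrite <- Rmult_assoc, <- exp_plus.
  replace (/ exp (- t)) with (exp t).
  2:{ rewrite exp_Ropp, Rinv_inv; auto. }
  f_equal. f_equal. field. lra.
Qed.

Lemma W_deriv q U dU t : (forall r, 0 < r -> derivable_pt_lim U r (dU r)) ->
  derivable_pt_lim (Wf q U) t (Df q U dU t).
Proof.
  intros HdU. unfold Wf, Df.
  eapply dext. apply dmul. apply dexp. apply dscal. apply did.
  apply (dcomp U exp). apply derivable_pt_lim_exp. apply HdU, exp_pos.
  cbv beta; ring.
Qed.

Lemma F1_scale q mu beta c x y : 0 < q -> 0 < c ->
  F1 q mu beta (c * x) (c * y) = Rpower c (2 * q + 1) * F1 q mu beta x y.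
Proof.
  intros Hq Hc. unfold F1. rewrite !rpow_mult; auto.
  assert (E : Rpower c (2 * q + 1) = Rpower c q * Rpower c (q + 1)).
  { rewrite <- Rpower_plus. f_equal; ring. }
  rewrite E. ring.
Qed.

Lemma Rpower_exp c y : Rpower (exp c) y = exp (y * c).
Proof. unfold Rpower; now rewrite ln_exp. Qed.

Lemma F1_W q mu beta U V t : 0 < q ->
  F1 q mu beta (Wf q U t) (Wf q V t) = exp (/ q * t) * exp t ^ 2 * F1 q mu beta (U (exp t)) (V (exp t)).
Proof.
  intros Hq. unfold Wf. rewrite F1_scale; auto; [|apply exp_pos].
  rewrite Rpower_exp. f_equal. simpl. rewrite Rmult_1_r, <- !exp_plus. f_equal. field. lra.
Qed.

Lemma D_ode n q mu beta U V dU ddU t : 0 < q ->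
  (forall r, 0 < r -> derivable_pt_lim U r (dU r)) ->
  (forall r, 0 < r -> derivable_pt_lim dU r (ddU r)) ->
  (forall r, 0 < r -> - (ddU r + (INR n - 1) / r * dU r) = F1 q mu beta (U r) (V r)) ->
  derivable_pt_lim (Df q U dU) t
    (- aa n q * Df q U dU t + sg n q * Wf q U t - F1 q mu beta (Wf q U t) (Wf q V t)).
Proof.
  intros Hq HdU HddU Heq. rewrite F1_W; auto. unfold Df.
  assert (Hs := exp_pos t).
  eapply dext. apply dmul. apply dexp. apply dscal. apply did.
  apply dplus. apply dscal. apply (dcomp U exp). apply derivable_pt_lim_exp. apply HdU; auto.
  apply dmul. apply derivable_pt_lim_exp. apply (dcomp dU exp). apply derivable_pt_lim_exp. apply HddU; auto.
  specialize (Heq (exp t) Hs).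
  assert (E : ddU (exp t) = - F1 q mu beta (U (exp t)) (V (exp t)) - (INR n - 1) / exp t * dU (exp t)) by lra.
  rewrite E. unfold aa, sg, Wf. field. split; lra.
Qed.


Lemma drpow b f x df : 1 < b -> derivable_pt_lim f x df ->
  derivable_pt_lim (fun y => rpow (f y) b) x (b * rpow (f x) (b - 1) * df).
Proof. intros Hb H. apply (dcomp (fun y => rpow y b) f); auto. apply rpow_deriv; auto. Qed.

Lemma energy_deriv n q mu1 mu2 beta s a W1 W2 D1 D2 t : 0 < q ->
  sigma0 n (2 * q + 1) = s ->
  (forall t, derivable_pt_lim W1 t (D1 t)) ->
  (forall t, derivable_pt_lim W2 t (D2 t)) ->
  (forall t, derivable_pt_lim D1 t (- a * D1 t + s * W1 t - F1 q mu1 beta (W1 t) (W2 t))) ->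
  (forall t, derivable_pt_lim D2 t (- a * D2 t + s * W2 t - F1 q mu2 beta (W2 t) (W1 t))) ->
  derivable_pt_lim (Psibar n (2 * q + 1) q mu1 mu2 beta W1 W2 D1 D2) t
     (- a * (D1 t ^ 2 + D2 t ^ 2)).
Proof.
  intros Hq Hs H1 H2 H3 H4. unfold Psibar. rewrite Hs.
  eapply dext.
  apply dplus. apply dscal. apply dminus. apply dplus; apply dsq; auto.
  apply dscal. apply dplus; apply dsq; auto.
  apply dscal. apply dplus. apply dplus. apply dscal. apply drpow. lra. auto.
  apply dmul. apply dscal. apply drpow. lra. auto. apply drpow. lra. auto.
  apply dscal. apply drpow. lra. auto.
  unfold F1.
  replace (2 * q + 1 + 1 - 1) with (2 * q + 1) by ring.
  replace (q + 1 - 1) with q by ring.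
  field. lra.
Qed.


Lemma F1_ge q mu beta x y : 0 < mu -> 0 < beta -> mu * rpow x (2 * q + 1) <= F1 q mu beta x y.
Proof.
  intros Hm Hb. unfold F1. assert (0 <= rpow x q) by apply rpow_ge0.
  assert (0 <= rpow y (q + 1)) by apply rpow_ge0.
  assert (0 <= beta * rpow x q * rpow y (q + 1)) by (apply Rmult_le_pos; [apply Rmult_le_pos|]; lra).
  lra.
Qed.

Lemma phi_deriv n q mu beta U V dU ddU s : (3 <= n)%nat -> 0 < s ->
  (forall r, 0 < r -> derivable_pt_lim dU r (ddU r)) ->
  (forall r, 0 < r -> - (ddU r + (INR n - 1) / r * dU r) = F1 q mu beta (U r) (V r)) ->
  derivable_pt_lim (fun r => r ^ (n - 1) * dU r) s (- s ^ (n - 1) * F1 q mu beta (U s) (V s)).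
Proof.
  intros Hn Hs HddU Heq.
  eapply dext. apply dmul. apply derivable_pt_lim_pow. apply HddU; auto.
  assert (E1 : INR (n - 1) = INR n - 1) by (rewrite minus_INR; [simpl; ring| lia]).
  assert (E2 : (n - 1 = S (n - 2))%nat) by lia.
  specialize (Heq s Hs).
  assert (E : ddU s = - F1 q mu beta (U s) (V s) - (INR n - 1) / s * dU s) by lra.
  rewrite E, E1, E2. simpl pow. simpl Init.Nat.pred. field. lra.
Qed.

Lemma fermat0 U dU s : 0 < s -> (forall r, 0 < r -> 0 <= U r) ->
  (forall r, 0 < r -> derivable_pt_lim U r (dU r)) -> U s = 0 -> dU s = 0.
Proof.
  intros Hs H0 HdU Hz.
  assert (pr : derivable_pt U s) by (exists (dU s); apply HdU; auto).
  rewrite <- (deriv_minimum U 0 (s + 1) s pr); auto; try lra.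
  - symmetry. apply derive_pt_eq_0. apply HdU; auto.
  - intros x Hx1 Hx2. rewrite Hz. apply H0; auto.
Qed.

Lemma pow_mono_le x y k : 0 <= x -> x <= y -> x ^ k <= y ^ k.
Proof. intros; apply pow_incr; auto. Qed.

Lemma caseB n q mu beta U V dU ddU : (3 <= n)%nat -> 0 < q -> 0 < mu -> 0 < beta ->
  (forall r, 0 < r -> 0 <= U r) ->
  (forall r, 0 < r -> derivable_pt_lim U r (dU r)) ->
  (forall r, 0 < r -> derivable_pt_lim dU r (ddU r)) ->
  (forall r, 0 < r -> - (ddU r + (INR n - 1) / r * dU r) = F1 q mu beta (U r) (V r)) ->
  (forall s, 1 <= s -> 0 <= s ^ (n - 1) * dU s) ->
  forall s, 1 <= s -> U s = 0.
Proof.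
  intros Hn Hq Hmu Hb H0 HdU HddU Heq Hphi s1 Hs1.
  destruct (H0 s1 ltac:(lra)) as [Hpos|]; [|auto]. exfalso.
  assert (HdUp : forall s, 1 <= s -> 0 <= dU s).
  { intros s Hs. specialize (Hphi s Hs). assert (0 < s ^ (n - 1)) by (apply pow_lt; lra).
    destruct (Rle_dec 0 (dU s)); auto. nra. }
  assert (Hmono : forall s, s1 <= s -> U s1 <= U s).
  { intros s Hs. apply (mvt_ge U dU); auto. intros c Hc; apply HdU; lra.
    intros c Hc; apply HdUp; lra. }
  set (c := rpow (U s1) (2 * q + 1)).
  assert (Hc : 0 < c) by (apply rpow_gt0; auto).
  set (K := mu * c * s1 ^ (n - 1)).
  assert (HK : 0 < K) by (unfold K; apply Rmult_lt_0_compat; [nra| apply pow_lt; lra]).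
  set (phi := fun r => r ^ (n - 1) * dU r).
  assert (Hdec : forall s, s1 <= s -> phi s + K * s <= phi s1 + K * s1).
  { intros s Hs.
    apply (mvt_le (fun r => phi r + K * r) (fun r => - r ^ (n - 1) * F1 q mu beta (U r) (V r) + K)); auto.
    - intros r Hr. apply dplus. apply (phi_deriv n q mu beta U V dU ddU); auto; lra.
      eapply dext. apply dscal, did. ring.
    - intros r Hr. assert (Hf := F1_ge q mu beta (U r) (V r) Hmu Hb).
      assert (c <= rpow (U r) (2 * q + 1)) by (apply rpow_le; [lra| apply Hmono; lra]).
      assert (s1 ^ (n - 1) <= r ^ (n - 1)) by (apply pow_incr; lra).
      assert (0 < s1 ^ (n - 1)) by (apply pow_lt; lra).
      assert (mu * c <= F1 q mu beta (U r) (V r)) by nra.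
      assert (s1 ^ (n - 1) * (mu * c) <= r ^ (n - 1) * F1 q mu beta (U r) (V r)).
      { apply Rmult_le_compat; nra. }
      unfold K. nra. }
  set (s := s1 + phi s1 / K + 1).
  assert (Hp1 : 0 <= phi s1) by (apply Hphi; lra).
  assert (Hss : s1 <= s) by (unfold s; assert (0 <= phi s1 / K) by (unfold Rdiv; apply Rmult_le_pos; [lra| left; apply Rinv_0_lt_compat; lra]); lra).
  specialize (Hdec s Hss). assert (Hp2 : 0 <= phi s) by (apply Hphi; lra).
  assert (K * s = K * s1 + phi s1 + K) by (unfold s; field; lra). lra.
Qed.

Lemma Rpower_inv_bound X k e : 0 < X -> 0 < k -> 0 < e -> k <= Rpower X (- e) ->
  X <= Rpower k (- / e).
Proof.
  intros HX Hk He H.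
  assert (EX : X = Rpower (Rpower X (- e)) (- / e)).
  { rewrite Rpower_mult. replace (- e * - / e) with 1 by (field; lra). rewrite Rpower_1; auto. }
  rewrite EX at 1. rewrite (Rpower_Ropp _ (/ e)), (Rpower_Ropp k (/ e)).
  apply Rinv_le_contravar. apply Rpower_gt0.
  apply Rle_Rpower_l. left; apply Rinv_0_lt_compat; auto. split; auto.
Qed.

Lemma caseA n q mu beta U V dU ddU s0 : (3 <= n)%nat -> 0 < q -> 0 < mu -> 0 < beta ->
  (forall r, 0 < r -> 0 <= U r) ->
  (forall r, 0 < r -> derivable_pt_lim U r (dU r)) ->
  (forall r, 0 < r -> derivable_pt_lim dU r (ddU r)) ->
  (forall r, 0 < r -> - (ddU r + (INR n - 1) / r * dU r) = F1 q mu beta (U r) (V r)) ->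
  1 <= s0 -> s0 ^ (n - 1) * dU s0 < 0 ->
  exists B, forall s, 4 * s0 <= s -> Rpower s (/ q) * U s <= B.
Proof.
  intros Hn Hq Hmu Hb H0 HdU HddU Heq Hs0 Hphi0.
  set (phi := fun r => r ^ (n - 1) * dU r).
  assert (Hphid : forall r, 0 < r -> derivable_pt_lim phi r (- r ^ (n - 1) * F1 q mu beta (U r) (V r))).
  { intros r Hr. apply (phi_deriv n q mu beta U V dU ddU); auto. }
  assert (HF0 : forall r, 0 <= F1 q mu beta (U r) (V r)).
  { intros r. assert (Hf := F1_ge q mu beta (U r) (V r) Hmu Hb).
    assert (0 <= rpow (U r) (2 * q + 1)) by apply rpow_ge0. nra. }
  assert (Hphineg : forall s, s0 <= s -> phi s < 0).
  { intros s Hs. assert (phi s <= phi s0); [|unfold phi in *; lra].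
    apply (mvt_le phi (fun r => - r ^ (n - 1) * F1 q mu beta (U r) (V r))); auto.
    intros c Hc; apply Hphid; lra.
    intros c Hc. assert (0 < c ^ (n - 1)) by (apply pow_lt; lra). specialize (HF0 c). nra. }
  assert (HdUneg : forall s, s0 <= s -> dU s < 0).
  { intros s Hs. specialize (Hphineg s Hs). unfold phi in Hphineg.
    assert (0 < s ^ (n - 1)) by (apply pow_lt; lra).
    destruct (Rlt_dec (dU s) 0); auto. nra. }
  assert (Hmono : forall x y, s0 <= x -> x <= y -> U y <= U x).
  { intros x y Hx Hxy. apply (mvt_le U dU); auto. intros c Hc; apply HdU; lra.
    intros c Hc; left; apply HdUneg; lra. }
  set (c := mu / 2 ^ n).
  assert (Hc : 0 < c) by (unfold c; apply Rdiv_lt_0_compat; auto; apply pow_lt; lra).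
  assert (Hiii : forall s, 2 * s0 <= s -> dU s <= - c * s * rpow (U s) (2 * q + 1)).
  { intros s Hs. set (R := rpow (U s) (2 * q + 1)).
    assert (HR : 0 <= R) by apply rpow_ge0.
    set (K := mu * R * (s / 2) ^ (n - 1)).
    assert (Hdec : phi s + K * s <= phi (s / 2) + K * (s / 2)).
    { apply (mvt_le (fun r => phi r + K * r) (fun r => - r ^ (n - 1) * F1 q mu beta (U r) (V r) + K)); [lra| |].
      - intros r Hr. apply dplus. apply Hphid; lra.
        eapply dext. apply dscal, did. ring.
      - intros r Hr. assert (Hf := F1_ge q mu beta (U r) (V r) Hmu Hb).
        assert (R <= rpow (U r) (2 * q + 1)) by (apply rpow_le; [lra| apply Hmono; lra]).
        assert ((s / 2) ^ (n - 1) <= r ^ (n - 1)) by (apply pow_incr; lra).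
        assert (0 < (s / 2) ^ (n - 1)) by (apply pow_lt; lra).
        assert (mu * R <= F1 q mu beta (U r) (V r)) by nra.
        assert (0 <= mu * R) by nra.
        assert ((s / 2) ^ (n - 1) * (mu * R) <= r ^ (n - 1) * F1 q mu beta (U r) (V r)).
        { apply Rmult_le_compat; nra. }
        unfold K. nra. }
    assert (Hp2 : phi (s / 2) < 0) by (apply Hphineg; lra).
    assert (HK : phi s <= - K * (s / 2)) by lra.
    unfold phi, K in HK.
    assert (E : (s / 2) ^ (n - 1) * (s / 2) = s ^ (n - 1) * (s / 2 ^ n)).
    { replace n with (S (n - 1)) at 3 by lia. simpl pow.
      unfold Rdiv. rewrite Rpow_mult_distr, pow_inv. field. apply pow_nonzero; lra. }
    assert (Hsp : 0 < s ^ (n - 1)) by (apply pow_lt; lra).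
    assert (s ^ (n - 1) * dU s <= s ^ (n - 1) * (- c * s * R)); [|nra].
    unfold c. replace (s ^ (n - 1) * (- (mu / 2 ^ n) * s * R)) with (- (mu * R) * (s ^ (n - 1) * (s / 2 ^ n))) by (field; apply pow_nonzero; lra).
    rewrite <- E. lra. }
  set (kap := q * c * (3 / 4)).
  assert (Hkap : 0 < kap) by (unfold kap; nra).
  exists (Rpower kap (- / (2 * q))). intros s Hs.
  destruct (H0 s ltac:(lra)) as [HUs|HUs].
  2:{ rewrite <- HUs, Rmult_0_r. left; apply Rpower_gt0. }
  apply Rpower_inv_bound; [apply Rmult_lt_0_compat; [apply Rpower_gt0|auto]|auto|lra|].
  assert (HUpos : forall r, 2 * s0 <= r <= s -> 0 < U r).
  { intros r Hr. apply Rlt_le_trans with (U s); auto. apply Hmono; lra. }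
  set (z := fun r => Rpower (U r) (- (2 * q)) - q * c * r ^ 2).
  assert (Hz : z (2 * s0) <= z s).
  { apply (mvt_ge z (fun r => - (2 * q) * Rpower (U r) (- (2 * q) - 1) * dU r - q * c * (2 * r))); [lra| |].
    - intros r Hr. unfold z. apply dminus.
      + apply (dcomp (fun y => Rpower y (- (2 * q))) U). apply HdU; lra.
        apply derivable_pt_lim_power. apply HUpos; lra.
      + apply dscal. eapply dext. apply derivable_pt_lim_pow. simpl; ring.
    - intros r Hr. assert (Hu := HUpos r Hr).
      assert (Hd := Hiii r ltac:(lra)). rewrite rpow_pos in Hd; auto.
      assert (E : Rpower (U r) (- (2 * q) - 1) * Rpower (U r) (2 * q + 1) = 1).
      { rewrite <- Rpower_plus. replace (- (2 * q) - 1 + (2 * q + 1)) with 0 by ring. apply Rpower_O; auto. }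
      assert (Hp := Rpower_gt0 (U r) (- (2 * q) - 1)).
      assert (- dU r * Rpower (U r) (- (2 * q) - 1) >= c * r * Rpower (U r) (2 * q + 1) * Rpower (U r) (- (2 * q) - 1)) by nra.
      assert (- dU r * Rpower (U r) (- (2 * q) - 1) >= c * r).
      { replace (c * r) with (c * r * (Rpower (U r) (- (2 * q) - 1) * Rpower (U r) (2 * q + 1))) by (rewrite E; ring). nra. }
      nra. }
  unfold z in Hz.
  assert (Hzpos := Rpower_gt0 (U (2 * s0)) (- (2 * q))).
  assert (HzU : q * c * (s ^ 2 - (2 * s0) ^ 2) <= Rpower (U s) (- (2 * q))) by nra.
  assert (Hss : (2 * s0) ^ 2 <= s ^ 2 / 4) by nra.
  rewrite <- Rpower_mult_distr; [|apply Rpower_gt0|auto].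
  rewrite Rpower_mult. replace (/ q * - (2 * q)) with (- INR 2) by (simpl; field; lra).
  rewrite Rpower_Ropp, Rpower_pow; [|lra].
  assert (Hs2 : 0 < s ^ 2) by (apply pow_lt; lra).
  unfold kap. 
  apply Rmult_le_reg_l with (s ^ 2); auto.
  rewrite <- (Rmult_assoc (s ^ 2) (/ s ^ 2)), Rinv_r; [|lra]. assert (q * c * (s ^ 2 - s ^ 2 / 4) <= q * c * (s ^ 2 - (2 * s0) ^ 2)) by (apply Rmult_le_compat_l; nra). nra.
Qed.


Lemma ln_le x y : 0 < x -> x <= y -> ln x <= ln y.
Proof. intros Hx [H|H]. left; apply ln_increasing; auto. subst; lra. Qed.
Lemma exp_le x y : x <= y -> exp x <= exp y.
Proof. intros [H|H]. left; apply exp_increasing; auto. subst; lra. Qed.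

Lemma decay n q mu beta U V dU ddU : (3 <= n)%nat -> 0 < q -> 0 < mu -> 0 < beta ->
  (forall r, 0 < r -> 0 <= U r) ->
  (forall r, 0 < r -> derivable_pt_lim U r (dU r)) ->
  (forall r, 0 < r -> derivable_pt_lim dU r (ddU r)) ->
  (forall r, 0 < r -> - (ddU r + (INR n - 1) / r * dU r) = F1 q mu beta (U r) (V r)) ->
  exists T0 B, 0 <= T0 /\ forall t, T0 <= t -> 0 <= Wf q U t <= B.
Proof.
  intros Hn Hq Hmu Hb H0 HdU HddU Heq.
  assert (HW0 : forall t, 0 <= Wf q U t).
  { intros t. unfold Wf. apply Rmult_le_pos. left; apply exp_pos. apply H0, exp_pos. }
  destruct (classic (exists s0, 1 <= s0 /\ s0 ^ (n - 1) * dU s0 < 0)) as [[s0 [Hs0 Hp]]|Hno].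
  - destruct (caseA n q mu beta U V dU ddU s0) as [B HB]; auto.
    exists (ln (4 * s0)), B. split.
    + rewrite <- ln_1. apply ln_le; lra.
    + intros t Ht. split; auto. unfold Wf. rewrite <- Rpower_exp.
      apply HB. rewrite <- (exp_ln (4 * s0)); [|lra]. apply exp_le; auto.
  - exists 0, 0. split; [lra|]. intros t Ht. split; auto.
    unfold Wf. rewrite (caseB n q mu beta U V dU ddU); auto; [lra| |].
    + intros s Hs. destruct (Rle_dec 0 (s ^ (n - 1) * dU s)); auto. exfalso; apply Hno.
      exists s; split; auto; lra.
    + rewrite <- exp_0. apply exp_le; auto.
Qed.

Lemma barrier_up A G B T0 W D g : 0 < A ->
  (forall t, derivable_pt_lim W t (D t)) ->
  (forall t, derivable_pt_lim D t (A * D t + g t)) ->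
  (forall t, T0 <= t -> 0 <= W t <= B) ->
  (forall t, T0 <= t -> Rabs (g t) <= G) ->
  forall t, T0 <= t -> D t <= G / A.
Proof.
  intros HA HW HD HWb Hg t0 Ht0.
  destruct (Rle_dec (D t0) (G / A)) as [|Hgt]; auto. exfalso.
  set (del := D t0 - G / A). assert (Hdel : 0 < del) by (unfold del; lra).
  assert (HY : forall t, t0 <= t -> del <= D t - G / A).
  { intros t Ht.
    assert (H : exp (- A * t0) * (D t0 - G / A) <= exp (- A * t) * (D t - G / A)).
    { apply (mvt_ge (fun s => exp (- A * s) * (D s - G / A))
          (fun s => exp (- A * s) * (G + g s))); auto.
      - intros c Hc. eapply dext. apply dmul. apply dexp. apply dscal. apply did.
        apply dminus. apply HD. apply dconst. cbv beta. field. lra.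
      - intros c Hc. apply Rmult_le_pos. left; apply exp_pos.
        assert (Hgc := Hg c ltac:(lra)). apply abs_le_inv in Hgc. lra. }
    assert (E1 : exp (A * t) * exp (- A * t) = 1).
    { rewrite <- exp_plus. replace (A * t + - A * t) with 0 by ring. apply exp_0. }
    assert (E2 : exp (A * t) * exp (- A * t0) = exp (A * (t - t0))).
    { rewrite <- exp_plus. f_equal; ring. }
    assert (H' := Rmult_le_compat_l (exp (A * t)) _ _ (Rlt_le _ _ (exp_pos _)) H).
    rewrite <- !Rmult_assoc, E1, E2, Rmult_1_l in H'.
    assert (1 <= exp (A * (t - t0))).
    { rewrite <- exp_0. apply exp_le. nra. }
    fold del in H'. nra. }
  set (t1 := t0 + (B + 1) / del).
  assert (Ht1 : t0 <= t1) by (unfold t1; assert (0 <= B) by (destruct (HWb t0 Ht0); lra);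
    assert (0 < (B + 1) / del) by (apply Rdiv_lt_0_compat; lra); lra).
  assert (H1 : W t0 - del * t0 <= W t1 - del * t1).
  { apply (mvt_ge (fun s => W s - del * s) (fun s => D s - del)); auto.
    intros c Hc. apply dminus; auto. eapply dext. apply dscal, did. ring.
    intros c Hc. specialize (HY c ltac:(lra)). assert (0 <= G / A).
    { assert (Hg0 := Hg t0 Ht0). assert (0 <= G) by (apply Rle_trans with (Rabs (g t0)); auto; apply Rabs_pos).
      unfold Rdiv; apply Rmult_le_pos; [lra| left; apply Rinv_0_lt_compat; lra]. }
    lra. }
  assert (E : del * t1 = del * t0 + (B + 1)) by (unfold t1; field; lra).
  destruct (HWb t0 Ht0). destruct (HWb t1 ltac:(lra)). lra.
Qed.

Lemma barrier A G B T0 W D g : 0 < A ->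
  (forall t, derivable_pt_lim W t (D t)) ->
  (forall t, derivable_pt_lim D t (A * D t + g t)) ->
  (forall t, T0 <= t -> 0 <= W t <= B) ->
  (forall t, T0 <= t -> Rabs (g t) <= G) ->
  forall t, T0 <= t -> Rabs (D t) <= G / A.
Proof.
  intros HA HW HD HWb Hg t Ht. apply Rabs_le. split.
  - assert (- D t <= G / A); [|lra].
    apply (barrier_up A G B T0 (fun s => B - W s) (fun s => - D s) (fun s => - g s)); auto.
    + intros s. eapply dext. apply dminus. apply dconst. apply HW. ring.
    + intros s. eapply dext. apply derivable_pt_lim_opp. apply HD. ring.
    + intros s Hs. specialize (HWb s Hs). lra.
    + intros s Hs. rewrite Rabs_Ropp. auto.
  - apply (barrier_up A G B T0 W D g); auto.
Qed.


Lemma nat_unbounded x : exists N : nat, x < INR N.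
Proof.
  destruct (Rlt_dec x 0) as [Hx|Hx]. exists 0%nat; simpl; lra.
  destruct (archimed x) as [H1 H2].
  assert (Hz : (0 <= up x)%Z). { apply le_IZR. lra. }
  exists (Z.to_nat (up x)). rewrite INR_IZR_INZ, Z2Nat.id; auto.
Qed.

Lemma eq_eps x y : (forall e, 0 < e -> Rabs (x - y) < e) -> x = y.
Proof.
  intros H. destruct (Req_dec x y) as [|Hne]; auto. exfalso.
  assert (Hp : 0 < Rabs (x - y)) by (apply Rabs_pos_lt; lra).
  specialize (H _ Hp). lra.
Qed.

Lemma mono_lim f T0 Mx : (forall x y, T0 <= x -> x <= y -> f x <= f y) ->
  (forall t, T0 <= t -> f t <= Mx) ->
  exists L, lim_pinfty f L /\ forall t, T0 <= t -> f t <= L.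
Proof.
  intros Hm Hb.
  set (E := fun y => exists t, T0 <= t /\ y = f t).
  assert (HE : bound E) by (exists Mx; intros y [t [Ht ->]]; auto).
  assert (HE' : exists y, E y) by (exists (f T0); exists T0; split; [lra|auto]).
  destruct (completeness E HE HE') as [L [Hub Hlub]].
  exists L. assert (Hle : forall t, T0 <= t -> f t <= L) by (intros t Ht; apply Hub; exists t; auto).
  split; auto.
  intros eps He.
  destruct (classic (exists t1, T0 <= t1 /\ L - eps < f t1)) as [[t1 [Ht1 Hf]]|Hno].
  - exists t1. intros t Ht. apply abs_lt. assert (f t1 <= f t) by (apply Hm; auto).
    assert (f t <= L) by (apply Hle; lra). lra.
  - exfalso. assert (L <= L - eps); [|lra]. apply Hlub. intros y [t [Ht ->]].
    destruct (Rle_dec (f t) (L - eps)); auto. exfalso; apply Hno; exists t; split; auto; lra.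
Qed.

Lemma VA_eps u l : ValAdh u l -> forall eps, 0 < eps -> forall N, exists p, (N <= p)%nat /\ Rabs (u p - l) < eps.
Proof.
  intros H eps He N. destruct (H (fun x => Rabs (x - l) < eps) N) as [p [Hp Hv]].
  - exists (mkposreal eps He). intros x Hx. unfold disc in Hx. exact Hx.
  - exists p; auto.
Qed.

Lemma limit_point (W1 W2 : R -> R) T0 B :
  (forall t, T0 <= t -> 0 <= W1 t <= B /\ 0 <= W2 t <= B) ->
  exists a b, forall eps, 0 < eps -> forall T, exists t, T <= t /\ T0 <= t /\
    Rabs (W1 t - a) < eps /\ Rabs (W2 t - b) < eps.
Proof.
  intros HB.
  assert (Hpos : forall k : nat, T0 <= T0 + INR k) by (intros k; assert (0 <= INR k) by apply pos_INR; lra).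
  set (u := fun k : nat => W1 (T0 + INR k)).
  destruct (Bolzano_Weierstrass u (fun c => 0 <= c <= B) (compact_P3 0 B)) as [a Ha].
  { intros k. apply (HB _ (Hpos k)). }
  assert (Hpick : forall (N j : nat), exists p, (N <= p)%nat /\ Rabs (u p - a) < / (INR j + 1)).
  { intros N j. apply VA_eps; auto. apply Rinv_0_lt_compat. assert (0 <= INR j) by apply pos_INR. lra. }
  set (pick := fun N j => proj1_sig (constructive_indefinite_description _ (Hpick N j))).
  assert (Hpk : forall N j, (N <= pick N j)%nat /\ Rabs (u (pick N j) - a) < / (INR j + 1)).
  { intros N j. unfold pick. destruct (constructive_indefinite_description _ (Hpick N j)); auto. }
  set (phi := fix phi (j : nat) : nat := match j with O => pick O O | S j' => pick (S (phi j')) (S j') end).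
  assert (Hphi1 : forall j, (j <= phi j)%nat).
  { induction j. lia. simpl. destruct (Hpk (S (phi j)) (S j)). lia. }
  assert (Hphi2 : forall j, Rabs (u (phi j) - a) < / (INR j + 1)).
  { intros j; destruct j; simpl; apply Hpk. }
  set (v := fun j => W2 (T0 + INR (phi j))).
  destruct (Bolzano_Weierstrass v (fun c => 0 <= c <= B) (compact_P3 0 B)) as [b Hb].
  { intros k. apply (HB _ (Hpos _)). }
  exists a, b. intros eps He T.
  destruct (nat_unbounded (Rmax (T - T0) (/ eps))) as [N HN].
  destruct (VA_eps v b Hb eps He N) as [j [Hj Hv]].
  exists (T0 + INR (phi j)).
  assert (HNj : INR N <= INR (phi j)) by (apply le_INR; specialize (Hphi1 j); lia).
  assert (HjN : INR N <= INR j) by (apply le_INR; auto).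
  assert (H1 := Rmax_l (T - T0) (/ eps)). assert (H2 := Rmax_r (T - T0) (/ eps)).
  split; [lra|]. split; [apply Hpos|]. split; auto.
  apply Rlt_trans with (1 := Hphi2 j).
  rewrite <- (Rinv_inv eps). apply Rinv_lt_contravar.
  apply Rmult_lt_0_compat. apply Rinv_0_lt_compat; auto. assert (0 <= INR j) by apply pos_INR. lra.
  lra.
Qed.


Definition C1 (h : R -> R) a := forall eps, 0 < eps -> exists eta, 0 < eta /\
  forall x, Rabs (x - a) < eta -> Rabs (h x - h a) < eps.
Definition C2 (f : R -> R -> R) a b := forall eps, 0 < eps -> exists eta, 0 < eta /\
  forall x y, Rabs (x - a) < eta -> Rabs (y - b) < eta -> Rabs (f x y - f a b) < eps.

Lemma C1_deriv h a l : derivable_pt_lim h a l -> C1 h a.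
Proof. intros H eps He. apply cont_eps; [eapply dcont; eauto| auto]. Qed.
Lemma C1_rpow e a : 0 < e -> C1 (fun x => rpow x e) a.
Proof. intros He eps Heps. apply rpow_cont; auto. Qed.

Lemma C2_fst h a b : C1 h a -> C2 (fun x y => h x) a b.
Proof. intros H eps He. destruct (H eps He) as [eta [Heta Hx]]. exists eta; split; auto. Qed.
Lemma C2_snd h a b : C1 h b -> C2 (fun x y => h y) a b.
Proof. intros H eps He. destruct (H eps He) as [eta [Heta Hx]]. exists eta; split; auto. Qed.
Lemma C2_const c a b : C2 (fun x y => c) a b.
Proof. intros eps He. exists 1; split; [lra|]. intros. rewrite Rminus_diag, Rabs_R0; auto. Qed.

Lemma C2_plus f g a b : C2 f a b -> C2 g a b -> C2 (fun x y => f x y + g x y) a b.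
Proof.
  intros Hf Hg eps He. destruct (Hf (eps/2) ltac:(lra)) as [e1 [He1 H1]].
  destruct (Hg (eps/2) ltac:(lra)) as [e2 [He2 H2]].
  exists (Rmin e1 e2); split. apply Rmin_pos; auto.
  intros x y Hx Hy. assert (Hx1 := Rlt_le_trans _ _ _ Hx (Rmin_l _ _)). assert (Hx2 := Rlt_le_trans _ _ _ Hx (Rmin_r _ _)).
  assert (Hy1 := Rlt_le_trans _ _ _ Hy (Rmin_l _ _)). assert (Hy2 := Rlt_le_trans _ _ _ Hy (Rmin_r _ _)).
  specialize (H1 x y Hx1 Hy1). specialize (H2 x y Hx2 Hy2).
  apply abs_lt_inv in H1. apply abs_lt_inv in H2. apply abs_lt. lra.
Qed.
Lemma C2_opp f a b : C2 f a b -> C2 (fun x y => - f x y) a b.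
Proof.
  intros Hf eps He. destruct (Hf eps He) as [e1 [He1 H1]]. exists e1; split; auto.
  intros x y Hx Hy. specialize (H1 x y Hx Hy). apply abs_lt_inv in H1. apply abs_lt. lra.
Qed.
Lemma C2_minus f g a b : C2 f a b -> C2 g a b -> C2 (fun x y => f x y - g x y) a b.
Proof. intros Hf Hg. apply (C2_plus f (fun x y => - g x y)); auto. apply C2_opp; auto. Qed.

Lemma C2_mult f g a b : C2 f a b -> C2 g a b -> C2 (fun x y => f x y * g x y) a b.
Proof.
  intros Hf Hg eps He.
  set (Mf := Rabs (f a b) + 1). set (Mg := Rabs (g a b) + 1).
  assert (HMf : 0 < Mf) by (unfold Mf; assert (0 <= Rabs (f a b)) by apply Rabs_pos; lra).
  assert (HMg : 0 < Mg) by (unfold Mg; assert (0 <= Rabs (g a b)) by apply Rabs_pos; lra).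
  destruct (Hf (eps / (2 * Mg)) ltac:(apply Rdiv_lt_0_compat; lra)) as [e1 [He1 H1]].
  destruct (Hg (Rmin 1 (eps / (2 * Mf))) ltac:(apply Rmin_pos; [lra| apply Rdiv_lt_0_compat; lra])) as [e2 [He2 H2]].
  exists (Rmin e1 e2); split. apply Rmin_pos; auto.
  intros x y Hx Hy. assert (Hx1 := Rlt_le_trans _ _ _ Hx (Rmin_l _ _)). assert (Hx2 := Rlt_le_trans _ _ _ Hx (Rmin_r _ _)).
  assert (Hy1 := Rlt_le_trans _ _ _ Hy (Rmin_l _ _)). assert (Hy2 := Rlt_le_trans _ _ _ Hy (Rmin_r _ _)).
  specialize (H1 x y Hx1 Hy1). specialize (H2 x y Hx2 Hy2).
  assert (H2a := Rlt_le_trans _ _ _ H2 (Rmin_l _ _)). assert (H2b := Rlt_le_trans _ _ _ H2 (Rmin_r _ _)).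
  replace (f x y * g x y - f a b * g a b) with ((f x y - f a b) * g x y + f a b * (g x y - g a b)) by ring.
  eapply Rle_lt_trans. apply Rabs_triang. rewrite !Rabs_mult.
  assert (Hgx : Rabs (g x y) <= Mg).
  { unfold Mg. replace (g x y) with (g a b + (g x y - g a b)) by ring.
    eapply Rle_trans. apply Rabs_triang. lra. }
  assert (T1 : Rabs (f x y - f a b) * Rabs (g x y) < eps / 2).
  { assert (Rabs (f x y - f a b) * Rabs (g x y) <= Rabs (f x y - f a b) * Mg) by (apply Rmult_le_compat_l; [apply Rabs_pos|auto]).
    assert (Rabs (f x y - f a b) * Mg < eps / (2 * Mg) * Mg) by (apply Rmult_lt_compat_r; auto).
    replace (eps / (2 * Mg) * Mg) with (eps / 2) in H0 by (field; lra). lra. }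
  assert (T2 : Rabs (f a b) * Rabs (g x y - g a b) <= Mf * (eps / (2 * Mf))).
  { apply Rmult_le_compat; [apply Rabs_pos|apply Rabs_pos|unfold Mf; lra|lra]. }
  replace (Mf * (eps / (2 * Mf))) with (eps / 2) in T2 by (field; lra).
  lra.
Qed.


Lemma gzero a M T0 W Wo D Do gf x0 y0 : 0 < M ->
  (forall t, derivable_pt_lim W t (D t)) -> (forall t, derivable_pt_lim Wo t (Do t)) ->
  (forall t, derivable_pt_lim D t (- a * D t + gf (W t) (Wo t))) ->
  (forall t, T0 <= t -> Rabs (D t) <= M /\ Rabs (Do t) <= M) ->
  (forall eps, 0 < eps -> exists T, forall t, T <= t -> Rabs (D t) < eps) ->
  (forall eps, 0 < eps -> forall T, exists t, T <= t /\ T0 <= t /\ Rabs (W t - x0) < eps /\ Rabs (Wo t - y0) < eps) ->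
  C2 gf x0 y0 -> gf x0 y0 = 0.
Proof.
  intros HM HW HWo HD HDb HD0 HLP HC.
  destruct (Req_dec (gf x0 y0) 0) as [|Hc]; auto. exfalso.
  set (c := gf x0 y0). assert (Hca : 0 < Rabs c) by (apply Rabs_pos_lt; auto).
  destruct (HC (Rabs c / 2) ltac:(lra)) as [eta [Heta Hg]].
  set (h := eta / (2 * M)). assert (Hh : 0 < h) by (unfold h; apply Rdiv_lt_0_compat; lra).
  assert (Ha1 : 0 < Rabs a + 1) by (assert (0 <= Rabs a) by apply Rabs_pos; lra).
  set (e0 := Rmin (h * Rabs c / 16) (Rabs c / (8 * (Rabs a + 1)))).
  assert (He0 : 0 < e0) by (apply Rmin_pos; [nra| apply Rdiv_lt_0_compat; lra]).
  destruct (HD0 e0 He0) as [T2 HT2].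
  destruct (HLP (eta / 2) ltac:(lra) T2) as [t [Ht2 [Ht0 [Hw Hwo]]]].
  destruct (MVT_cor2 D (fun s => - a * D s + gf (W s) (Wo s)) t (t + h)) as [xi [Hxi Hxi']]; [lra| intros; apply HD|].
  assert (Hmv1 : Rabs (W xi - W t) <= M * (xi - t)).
  { apply (mvt_bound W D); [lra| intros; apply HW| intros s Hs; apply HDb; lra]. }
  assert (Hmv2 : Rabs (Wo xi - Wo t) <= M * (xi - t)).
  { apply (mvt_bound Wo Do); [lra| intros; apply HWo| intros s Hs; apply HDb; lra]. }
  assert (HMh : M * (xi - t) <= eta / 2).
  { assert (M * (xi - t) <= M * h) by (apply Rmult_le_compat_l; lra). unfold h in H.
    replace (M * (eta / (2 * M))) with (eta / 2) in H by (field; lra). lra. }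
  assert (Hx1 : Rabs (W xi - x0) < eta).
  { replace (W xi - x0) with ((W xi - W t) + (W t - x0)) by ring.
    eapply Rle_lt_trans. apply Rabs_triang. lra. }
  assert (Hx2 : Rabs (Wo xi - y0) < eta).
  { replace (Wo xi - y0) with ((Wo xi - Wo t) + (Wo t - y0)) by ring.
    eapply Rle_lt_trans. apply Rabs_triang. lra. }
  specialize (Hg _ _ Hx1 Hx2). fold c in Hg.
  assert (Hgl : Rabs c / 2 < Rabs (gf (W xi) (Wo xi))).
  { assert (H := Rabs_triang_inv c (c - gf (W xi) (Wo xi))).
    replace (c - (c - gf (W xi) (Wo xi))) with (gf (W xi) (Wo xi)) in H by ring.
    rewrite Rabs_minus_sym in H. lra. }
  assert (Hdxi : Rabs (D xi) < e0) by (apply HT2; lra).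
  assert (Hdt : Rabs (D t) < e0) by (apply HT2; lra).
  assert (Hdth : Rabs (D (t + h)) < e0) by (apply HT2; lra).
  assert (He0a : e0 <= h * Rabs c / 16) by apply Rmin_l.
  assert (He0b : e0 <= Rabs c / (8 * (Rabs a + 1))) by apply Rmin_r.
  assert (Had : Rabs (- a * D xi) <= Rabs c / 8).
  { rewrite Rabs_mult, Rabs_Ropp.
    assert (Rabs a * Rabs (D xi) <= (Rabs a + 1) * e0).
    { apply Rmult_le_compat; try apply Rabs_pos; lra. }
    assert ((Rabs a + 1) * e0 <= (Rabs a + 1) * (Rabs c / (8 * (Rabs a + 1)))) by (apply Rmult_le_compat_l; lra).
    replace ((Rabs a + 1) * (Rabs c / (8 * (Rabs a + 1)))) with (Rabs c / 8) in H0 by (field; lra). lra. }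
  assert (Hder : 3 * Rabs c / 8 <= Rabs (- a * D xi + gf (W xi) (Wo xi))).
  { assert (H := Rabs_triang_inv (gf (W xi) (Wo xi)) (- (- a * D xi))).
    replace (gf (W xi) (Wo xi) - - (- a * D xi)) with (- a * D xi + gf (W xi) (Wo xi)) in H by ring.
    rewrite Rabs_Ropp in H. lra. }
  assert (Hdiff : Rabs (D (t + h) - D t) < 2 * e0).
  { eapply Rle_lt_trans. apply Rabs_triang. rewrite Rabs_Ropp. lra. }
  rewrite Hxi, Rabs_mult, (Rabs_pos_eq (t + h - t)) in Hdiff; [|lra].
  replace (t + h - t) with h in Hdiff by ring.
  assert (3 * Rabs c / 8 * h <= Rabs (- a * D xi + gf (W xi) (Wo xi)) * h) by (apply Rmult_le_compat_r; lra).
  nra.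
Qed.


Definition Gfun q s mu1 mu2 beta x y := - s / 2 * (x ^ 2 + y ^ 2) + / (2 * q + 1 + 1) *
  (mu1 * rpow x (2 * q + 1 + 1) + 2 * beta * rpow x (q + 1) * rpow y (q + 1) + mu2 * rpow y (2 * q + 1 + 1)).

Lemma Psi_split n q mu1 mu2 beta s W1 W2 D1 D2 t : sigma0 n (2 * q + 1) = s ->
  Psibar n (2 * q + 1) q mu1 mu2 beta W1 W2 D1 D2 t =
  / 2 * (D1 t ^ 2 + D2 t ^ 2) + Gfun q s mu1 mu2 beta (W1 t) (W2 t).
Proof. intros Hs. unfold Psibar, Gfun. rewrite Hs. cbv beta. set (k := / (2 * q + 1 + 1)). unfold Rdiv. ring. Qed.

Ltac c2 := repeat first [ apply C2_const | apply C2_plus | apply C2_minus | apply C2_mult | apply C2_opp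
  | (apply C2_fst; apply C1_rpow; lra) | (apply C2_snd; apply C1_rpow; lra)
  | (apply C2_fst; eapply C1_deriv; apply derivable_pt_lim_pow)
  | (apply C2_snd; eapply C1_deriv; apply derivable_pt_lim_pow)
  | (apply C2_fst; eapply C1_deriv; apply did) | (apply C2_snd; eapply C1_deriv; apply did) ].

Lemma Gfun_C2 q s mu1 mu2 beta x0 y0 : 0 < q -> C2 (Gfun q s mu1 mu2 beta) x0 y0.
Proof. intros Hq. unfold Gfun. c2. Qed.

Lemma g_C2 q s mu beta x0 y0 : 0 < q -> C2 (fun x y => s * x - F1 q mu beta x y) x0 y0.
Proof. intros Hq. unfold F1. c2. Qed.

Lemma F1_nonneg q mu beta x y : 0 < mu -> 0 < beta -> 0 <= F1 q mu beta x y.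
Proof.
  intros. unfold F1. assert (0 <= rpow x (2*q+1)) by apply rpow_ge0.
  assert (0 <= rpow x q) by apply rpow_ge0. assert (0 <= rpow y (q+1)) by apply rpow_ge0.
  assert (0 <= beta * rpow x q * rpow y (q + 1)) by (apply Rmult_le_pos; [apply Rmult_le_pos|]; lra).
  nra.
Qed.

Lemma F1_mono q mu beta x y x' y' : 0 < q -> 0 < mu -> 0 < beta -> x <= x' -> y <= y' ->
  F1 q mu beta x y <= F1 q mu beta x' y'.
Proof.
  intros. unfold F1.
  assert (rpow x (2*q+1) <= rpow x' (2*q+1)) by (apply rpow_le; lra).
  assert (rpow x q <= rpow x' q) by (apply rpow_le; lra).
  assert (rpow y (q+1) <= rpow y' (q+1)) by (apply rpow_le; lra).
  assert (0 <= rpow x q) by apply rpow_ge0. assert (0 <= rpow y (q+1)) by apply rpow_ge0.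
  assert (rpow x q * rpow y (q + 1) <= rpow x' q * rpow y' (q + 1)) by (apply Rmult_le_compat; lra).
  nra.
Qed.


Lemma sq_abs_bound x M : Rabs x <= M -> x ^ 2 <= M ^ 2.
Proof. intros H. apply abs_le_inv in H. nra. Qed.

Lemma analysis n q mu1 mu2 beta s a W1 W2 D1 D2 T0 B :
  0 < q -> 0 < mu1 -> 0 < mu2 -> 0 < beta -> 0 < s -> a < 0 ->
  sigma0 n (2 * q + 1) = s ->
  (forall t, derivable_pt_lim W1 t (D1 t)) ->
  (forall t, derivable_pt_lim W2 t (D2 t)) ->
  (forall t, derivable_pt_lim D1 t (- a * D1 t + s * W1 t - F1 q mu1 beta (W1 t) (W2 t))) ->
  (forall t, derivable_pt_lim D2 t (- a * D2 t + s * W2 t - F1 q mu2 beta (W2 t) (W1 t))) ->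
  (forall t, T0 <= t -> 0 <= W1 t <= B /\ 0 <= W2 t <= B) ->
  exists L, lim_pinfty (Psibar n (2 * q + 1) q mu1 mu2 beta W1 W2 D1 D2) L /\
    exists x0 y0, 0 <= x0 /\ 0 <= y0 /\ s * x0 - F1 q mu1 beta x0 y0 = 0 /\
      s * y0 - F1 q mu2 beta y0 x0 = 0 /\ L = Gfun q s mu1 mu2 beta x0 y0.
Proof.
  intros Hq Hm1 Hm2 Hb Hs Ha Hsig H1 H2 H3 H4 HB.
  assert (HB0 : 0 <= B) by (destruct (HB T0 ltac:(lra)); lra).
  set (G1 := s * B + F1 q mu1 beta B B). set (G2 := s * B + F1 q mu2 beta B B).
  assert (Hg1 : forall t, T0 <= t -> Rabs (s * W1 t - F1 q mu1 beta (W1 t) (W2 t)) <= G1).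
  { intros t Ht. destruct (HB t Ht) as [[? ?] [? ?]].
    assert (0 <= F1 q mu1 beta (W1 t) (W2 t)) by (apply F1_nonneg; auto).
    assert (F1 q mu1 beta (W1 t) (W2 t) <= F1 q mu1 beta B B) by (apply F1_mono; auto).
    assert (s * W1 t <= s * B) by (apply Rmult_le_compat_l; lra).
    assert (0 <= s * W1 t) by nra. apply Rabs_le. unfold G1. lra. }
  assert (Hg2 : forall t, T0 <= t -> Rabs (s * W2 t - F1 q mu2 beta (W2 t) (W1 t)) <= G2).
  { intros t Ht. destruct (HB t Ht) as [[? ?] [? ?]].
    assert (0 <= F1 q mu2 beta (W2 t) (W1 t)) by (apply F1_nonneg; auto).
    assert (F1 q mu2 beta (W2 t) (W1 t) <= F1 q mu2 beta B B) by (apply F1_mono; auto).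
    assert (s * W2 t <= s * B) by (apply Rmult_le_compat_l; lra).
    assert (0 <= s * W2 t) by nra. apply Rabs_le. unfold G2. lra. }
  assert (HG1 : 0 <= G1) by (apply Rle_trans with (2 := Hg1 T0 ltac:(lra)); apply Rabs_pos).
  assert (HG2 : 0 <= G2) by (apply Rle_trans with (2 := Hg2 T0 ltac:(lra)); apply Rabs_pos).
  assert (HD1 : forall t, T0 <= t -> Rabs (D1 t) <= G1 / (- a)).
  { apply (barrier (- a) G1 B T0 W1 D1 (fun t => s * W1 t - F1 q mu1 beta (W1 t) (W2 t))); auto; try lra.
    intros t; eapply dext; [apply H3|]; ring. intros t Ht; apply HB in Ht; tauto. }
  assert (HD2 : forall t, T0 <= t -> Rabs (D2 t) <= G2 / (- a)).
  { apply (barrier (- a) G2 B T0 W2 D2 (fun t => s * W2 t - F1 q mu2 beta (W2 t) (W1 t))); auto; try lra.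
    intros t; eapply dext; [apply H4|]; ring. intros t Ht; apply HB in Ht; tauto. }
  set (M := G1 / (- a) + G2 / (- a) + 1).
  assert (HGa1 : 0 <= G1 / (- a)) by (unfold Rdiv; apply Rmult_le_pos; [lra| left; apply Rinv_0_lt_compat; lra]).
  assert (HGa2 : 0 <= G2 / (- a)) by (unfold Rdiv; apply Rmult_le_pos; [lra| left; apply Rinv_0_lt_compat; lra]).
  assert (HM : 0 < M) by (unfold M; lra).
  assert (HDb : forall t, T0 <= t -> Rabs (D1 t) <= M /\ Rabs (D2 t) <= M).
  { intros t Ht. specialize (HD1 t Ht). specialize (HD2 t Ht). unfold M. lra. }
  set (Psi := Psibar n (2 * q + 1) q mu1 mu2 beta W1 W2 D1 D2).
  assert (HPd : forall t, derivable_pt_lim Psi t (- a * (D1 t ^ 2 + D2 t ^ 2))).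
  { intros t. apply (energy_deriv n q mu1 mu2 beta s a); auto. }
  assert (HPm : forall x y, T0 <= x -> x <= y -> Psi x <= Psi y).
  { intros x y Hx Hxy. apply (mvt_ge Psi (fun t => - a * (D1 t ^ 2 + D2 t ^ 2))); auto.
    intros c Hc. assert (0 <= D1 c ^ 2 + D2 c ^ 2) by nra. nra. }
  set (Pmax := M ^ 2 + M ^ 2 + / (2 * q + 1 + 1) * (mu1 * rpow B (2 * q + 1 + 1) + 2 * beta * rpow B (q + 1) * rpow B (q + 1) + mu2 * rpow B (2 * q + 1 + 1))).
  assert (HPb : forall t, T0 <= t -> Psi t <= Pmax).
  { intros t Ht. unfold Psi. rewrite (Psi_split n q mu1 mu2 beta s); auto. unfold Gfun, Pmax.
    destruct (HB t Ht) as [[? ?] [? ?]]. destruct (HDb t Ht).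
    assert (D1 t ^ 2 <= M ^ 2) by (apply sq_abs_bound; auto).
    assert (D2 t ^ 2 <= M ^ 2) by (apply sq_abs_bound; auto).
    assert (rpow (W1 t) (2 * q + 1 + 1) <= rpow B (2 * q + 1 + 1)) by (apply rpow_le; lra).
    assert (rpow (W2 t) (2 * q + 1 + 1) <= rpow B (2 * q + 1 + 1)) by (apply rpow_le; lra).
    assert (rpow (W1 t) (q + 1) <= rpow B (q + 1)) by (apply rpow_le; lra).
    assert (rpow (W2 t) (q + 1) <= rpow B (q + 1)) by (apply rpow_le; lra).
    assert (0 <= rpow (W1 t) (q + 1)) by apply rpow_ge0. assert (0 <= rpow (W2 t) (q + 1)) by apply rpow_ge0.
    assert (rpow (W1 t) (q + 1) * rpow (W2 t) (q + 1) <= rpow B (q + 1) * rpow B (q + 1)) by (apply Rmult_le_compat; lra).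
    assert (0 < / (2 * q + 1 + 1)) by (apply Rinv_0_lt_compat; lra).
    set (k := / (2 * q + 1 + 1)) in *.
    assert (0 <= s * (W1 t ^ 2 + W2 t ^ 2)) by (apply Rmult_le_pos; nra).
    assert (Hx : mu1 * rpow (W1 t) (2 * q + 1 + 1) + 2 * beta * rpow (W1 t) (q + 1) * rpow (W2 t) (q + 1) + mu2 * rpow (W2 t) (2 * q + 1 + 1) <= mu1 * rpow B (2 * q + 1 + 1) + 2 * beta * rpow B (q + 1) * rpow B (q + 1) + mu2 * rpow B (2 * q + 1 + 1)) by nra.
    assert (k * (mu1 * rpow (W1 t) (2 * q + 1 + 1) + 2 * beta * rpow (W1 t) (q + 1) * rpow (W2 t) (q + 1) + mu2 * rpow (W2 t) (2 * q + 1 + 1)) <= k * (mu1 * rpow B (2 * q + 1 + 1) + 2 * beta * rpow B (q + 1) * rpow B (q + 1) + mu2 * rpow B (2 * q + 1 + 1))) by (apply Rmult_le_compat_l; lra).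
    unfold Rdiv. nra. }
  destruct (mono_lim Psi T0 Pmax HPm HPb) as [L [HL HLle]].
  exists L. split; [exact HL|].
  set (K1 := - a * M + G1). set (K2 := - a * M + G2).
  assert (HK1 : forall t, T0 <= t -> Rabs (- a * D1 t + s * W1 t - F1 q mu1 beta (W1 t) (W2 t)) <= K1).
  { intros t Ht. replace (- a * D1 t + s * W1 t - F1 q mu1 beta (W1 t) (W2 t)) with (- a * D1 t + (s * W1 t - F1 q mu1 beta (W1 t) (W2 t))) by ring.
    eapply Rle_trans. apply Rabs_triang. rewrite Rabs_mult, Rabs_Ropp, (Rabs_left a); auto.
    destruct (HDb t Ht). assert (- a * Rabs (D1 t) <= - a * M) by (apply Rmult_le_compat_l; lra).
    specialize (Hg1 t Ht). unfold K1. lra. }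
  assert (HK2 : forall t, T0 <= t -> Rabs (- a * D2 t + s * W2 t - F1 q mu2 beta (W2 t) (W1 t)) <= K2).
  { intros t Ht. replace (- a * D2 t + s * W2 t - F1 q mu2 beta (W2 t) (W1 t)) with (- a * D2 t + (s * W2 t - F1 q mu2 beta (W2 t) (W1 t))) by ring.
    eapply Rle_trans. apply Rabs_triang. rewrite Rabs_mult, Rabs_Ropp, (Rabs_left a); auto.
    destruct (HDb t Ht). assert (- a * Rabs (D2 t) <= - a * M) by (apply Rmult_le_compat_l; lra).
    specialize (Hg2 t Ht). unfold K2. lra. }
  assert (HK10 : 0 <= K1) by (apply Rle_trans with (2 := HK1 T0 ltac:(lra)); apply Rabs_pos).
  assert (HK20 : 0 <= K2) by (apply Rle_trans with (2 := HK2 T0 ltac:(lra)); apply Rabs_pos).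
  set (Q := fun t => D1 t ^ 2 + D2 t ^ 2).
  set (dQ := fun t => 2 * D1 t * (- a * D1 t + s * W1 t - F1 q mu1 beta (W1 t) (W2 t)) + 2 * D2 t * (- a * D2 t + s * W2 t - F1 q mu2 beta (W2 t) (W1 t))).
  assert (HQd : forall t, derivable_pt_lim Q t (dQ t)).
  { intros t. unfold Q, dQ. apply dplus; apply dsq; auto. }
  set (K := 2 * M * K1 + 2 * M * K2 + 1).
  assert (HK : 0 < K) by (unfold K; nra).
  assert (HdQ : forall t, T0 <= t -> Rabs (dQ t) <= K).
  { intros t Ht. unfold dQ. eapply Rle_trans. apply Rabs_triang. rewrite !Rabs_mult.
    rewrite (Rabs_pos_eq 2); [|lra]. destruct (HDb t Ht).
    assert (Rabs (D1 t) * Rabs (- a * D1 t + s * W1 t - F1 q mu1 beta (W1 t) (W2 t)) <= M * K1) by (apply Rmult_le_compat; try apply Rabs_pos; auto).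
    assert (Rabs (D2 t) * Rabs (- a * D2 t + s * W2 t - F1 q mu2 beta (W2 t) (W1 t)) <= M * K2) by (apply Rmult_le_compat; try apply Rabs_pos; auto).
    unfold K. nra. }
  assert (HQ0 : forall eps, 0 < eps -> exists T, forall t, T <= t -> Q t < eps).
  { intros eps He. apply NNPP. intros Hno.
    assert (Hinf : forall T, exists t, T <= t /\ eps <= Q t).
    { intros T. apply NNPP. intros Hn. apply Hno. exists T. intros t Ht.
      destruct (Rlt_dec (Q t) eps); auto. exfalso; apply Hn. exists t; split; auto; lra. }
    set (h := eps / (2 * K)). assert (Hh : 0 < h) by (unfold h; apply Rdiv_lt_0_compat; lra).
    set (c0 := - a * h * (eps / 2)). assert (Hc0 : 0 < c0) by (unfold c0; apply Rmult_lt_0_compat; [apply Rmult_lt_0_compat|]; lra).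
    destruct (HL (c0 / 2) ltac:(lra)) as [T1 HT1].
    destruct (Hinf (Rmax T0 T1)) as [t [Ht HQt]].
    assert (HT0 := Rmax_l T0 T1). assert (HT1' := Rmax_r T0 T1).
    assert (Hinc : Psi t + c0 <= Psi (t + h)).
    { assert (Psi t - (c0 / h) * t <= Psi (t + h) - (c0 / h) * (t + h)).
      { apply (mvt_ge (fun x => Psi x - (c0 / h) * x) (fun x => - a * (D1 x ^ 2 + D2 x ^ 2) - c0 / h)); [lra| |].
        - intros x Hx. apply dminus; auto. eapply dext. apply dscal, did. ring.
        - intros x Hx. assert (HQx : Rabs (Q x - Q t) <= K * (x - t)).
          { apply (mvt_bound Q dQ); [lra| intros; apply HQd| intros y Hy; apply HdQ; lra]. }
          assert (K * (x - t) <= K * h) by (apply Rmult_le_compat_l; lra).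
          assert (Kh : K * h = eps / 2) by (unfold h; field; lra).
          apply abs_le_inv in HQx. fold (Q x).
          assert (c0 / h = - a * (eps / 2)) by (unfold c0; field; lra).
          assert (eps / 2 <= Q x) by lra. nra. }
      assert (c0 / h * (t + h) - c0 / h * t = c0) by (field; lra). lra. }
    assert (A1 := HT1 t ltac:(lra)). assert (A2 := HT1 (t + h) ltac:(lra)).
    apply abs_lt_inv in A1. apply abs_lt_inv in A2. fold Psi in A1, A2. lra. }
  assert (HDz1 : forall eps, 0 < eps -> exists T, forall t, T <= t -> Rabs (D1 t) < eps).
  { intros eps He. destruct (HQ0 (eps ^ 2) ltac:(nra)) as [T HT]. exists T. intros t Ht.
    specialize (HT t Ht). unfold Q in HT. apply abs_lt. nra. }
  assert (HDz2 : forall eps, 0 < eps -> exists T, forall t, T <= t -> Rabs (D2 t) < eps).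
  { intros eps He. destruct (HQ0 (eps ^ 2) ltac:(nra)) as [T HT]. exists T. intros t Ht.
    specialize (HT t Ht). unfold Q in HT. apply abs_lt. nra. }
  destruct (limit_point W1 W2 T0 B HB) as [x0 [y0 HLP]].
  exists x0, y0.
  assert (Hx0 : 0 <= x0).
  { destruct (Rle_dec 0 x0); auto. exfalso. destruct (HLP (- x0) ltac:(lra) T0) as [t [? [Ht [Hw ?]]]].
    destruct (HB t Ht) as [[? ?] ?]. apply abs_lt_inv in Hw. lra. }
  assert (Hy0 : 0 <= y0).
  { destruct (Rle_dec 0 y0); auto. exfalso. destruct (HLP (- y0) ltac:(lra) T0) as [t [? [Ht [? Hw]]]].
    destruct (HB t Ht) as [? [? ?]]. apply abs_lt_inv in Hw. lra. }
  split; auto. split; auto. split; [|split].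
  - apply (gzero a M T0 W1 W2 D1 D2 (fun x y => s * x - F1 q mu1 beta x y) x0 y0); auto.
    intros t; eapply dext; [apply H3|]; ring.
    apply g_C2; auto.
  - apply (gzero a M T0 W2 W1 D2 D1 (fun x y => s * x - F1 q mu2 beta x y) y0 x0); auto.
    intros t; eapply dext; [apply H4|]; ring.
    intros t Ht; specialize (HDb t Ht); tauto.
    intros eps He T. destruct (HLP eps He T) as [t [? [? [? ?]]]]. exists t; auto.
    apply g_C2; auto.
  - symmetry. apply eq_eps. intros eps He.
    destruct (Gfun_C2 q s mu1 mu2 beta x0 y0 Hq (eps / 3) ltac:(lra)) as [eta [Heta HG]].
    destruct (HL (eps / 3) ltac:(lra)) as [T1 HT1].
    destruct (HQ0 (eps / 3) ltac:(lra)) as [T3 HT3].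
    destruct (HLP eta Heta (Rmax T1 T3)) as [t [Ht [_ [Hw1 Hw2]]]].
    assert (A := Rmax_l T1 T3). assert (A' := Rmax_r T1 T3).
    specialize (HG _ _ Hw1 Hw2). specialize (HT1 t ltac:(lra)). specialize (HT3 t ltac:(lra)).
    unfold Q in HT3. fold Psi in HT1. unfold Psi in HT1. rewrite (Psi_split n q mu1 mu2 beta s) in HT1; auto.
    apply abs_lt_inv in HG. apply abs_lt_inv in HT1.
    assert (0 <= D1 t ^ 2 + D2 t ^ 2) by nra.
    apply abs_lt. lra.
Qed.


Lemma Etau q s : 0 < q -> 0 < s -> Rpower (Rpower s (/ (2 * q))) (2 * q + 1) = s * Rpower s (/ (2 * q)).
Proof.
  intros Hq Hs. rewrite Rpower_mult. replace (/ (2 * q) * (2 * q + 1)) with (1 + / (2 * q)) by (field; lra).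
  rewrite Rpower_plus, Rpower_1; auto.
Qed.

Lemma comp_eq q mu beta s k l : 0 < q -> 0 < s -> 0 < k -> 0 <= l ->
  s * (Rpower s (/ (2 * q)) * k) - F1 q mu beta (Rpower s (/ (2 * q)) * k) (Rpower s (/ (2 * q)) * l) = 0 ->
  mu * Rpower k (2 * q) + beta * Rpower k (q - 1) * rpow l (q + 1) = 1.
Proof.
  intros Hq Hs Hk Hl H. set (tau := Rpower s (/ (2 * q))) in *.
  assert (Ht : 0 < tau) by apply Rpower_gt0.
  unfold F1 in H. rewrite !rpow_mult in H; auto.
  rewrite (rpow_pos k (2 * q + 1)), (rpow_pos k q) in H; auto.
  assert (E1 : Rpower tau q * Rpower tau (q + 1) = Rpower tau (2 * q + 1)).
  { rewrite <- Rpower_plus. f_equal; ring. }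
  assert (E2 : Rpower k (2 * q + 1) = Rpower k (2 * q) * k).
  { rewrite Rpower_plus, Rpower_1; auto. }
  assert (E3 : Rpower k q = Rpower k (q - 1) * k).
  { rewrite <- (Rpower_1 k) at 3; auto. rewrite <- Rpower_plus. f_equal; ring. }
  assert (E4 : Rpower tau (2 * q + 1) = s * tau) by (unfold tau; apply Etau; auto).
  replace (beta * (Rpower tau q * Rpower k q) * (Rpower tau (q + 1) * rpow l (q + 1)))
    with (beta * (Rpower tau q * Rpower tau (q + 1)) * Rpower k q * rpow l (q + 1)) in H by ring.
    rewrite E1, E2, E3, E4 in H.
  assert (Hp : 0 < s * tau * k) by (apply Rmult_lt_0_compat; [apply Rmult_lt_0_compat|]; lra).
  apply Rmult_eq_reg_r with (s * tau * k); [|lra].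
  lra.
Qed.

Lemma Lform q s k l : 0 < q -> 0 < s ->
  - (q / (2 * q + 2)) * ((Rpower s (/ (2 * q)) * k) ^ 2 + (Rpower s (/ (2 * q)) * l) ^ 2) * s =
  - ((2 * q + 1 - 1) / (2 * (2 * q + 1 + 1))) * (k ^ 2 + l ^ 2)
        * Rpower s ((2 * q + 1 + 1) / (2 * q + 1 - 1)).
Proof.
  intros Hq Hs.
  assert (E : Rpower s ((2 * q + 1 + 1) / (2 * q + 1 - 1)) = s * Rpower s (/ (2 * q)) * Rpower s (/ (2 * q))).
  { rewrite <- (Rpower_1 s) at 2; auto. rewrite <- !Rpower_plus. f_equal. field. lra. }
  rewrite E. field. lra.
Qed.

Lemma final_alg n q mu1 mu2 beta s x0 y0 : 0 < q -> 0 < s -> 0 <= x0 -> 0 <= y0 ->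
  sigma0 n (2 * q + 1) = s ->
  s * x0 - F1 q mu1 beta x0 y0 = 0 -> s * y0 - F1 q mu2 beta y0 x0 = 0 ->
  let L := Gfun q s mu1 mu2 beta x0 y0 in
  L = 0 \/ exists k l : R, kl_admissible q mu1 mu2 beta k l /\
    L = - ((2 * q + 1 - 1) / (2 * (2 * q + 1 + 1))) * (k ^ 2 + l ^ 2)
        * Rpower (sigma0 n (2 * q + 1)) ((2 * q + 1 + 1) / (2 * q + 1 - 1)).
Proof.
  intros Hq Hs Hx Hy Hsig Hg1 Hg2 L. rewrite Hsig.
  assert (HL : L = - (q / (2 * q + 2)) * (x0 ^ 2 + y0 ^ 2) * s).
  { unfold L, Gfun. unfold F1 in Hg1, Hg2.
    rewrite (rpow_succ x0 (2 * q + 1)), (rpow_succ y0 (2 * q + 1)), (rpow_succ x0 q), (rpow_succ y0 q); auto.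
    assert (E : mu1 * (x0 * rpow x0 (2 * q + 1)) + 2 * beta * (x0 * rpow x0 q) * (y0 * rpow y0 q) + mu2 * (y0 * rpow y0 (2 * q + 1))
      = x0 * (mu1 * rpow x0 (2 * q + 1) + beta * rpow x0 q * rpow y0 (q + 1)) + y0 * (mu2 * rpow y0 (2 * q + 1) + beta * rpow y0 q * rpow x0 (q + 1))).
    { rewrite (rpow_succ x0 q), (rpow_succ y0 q); auto. ring. }
    rewrite E. replace (mu1 * rpow x0 (2 * q + 1) + beta * rpow x0 q * rpow y0 (q + 1)) with (s * x0) by lra.
    replace (mu2 * rpow y0 (2 * q + 1) + beta * rpow y0 q * rpow x0 (q + 1)) with (s * y0) by lra.
    field. lra. }
  destruct (Req_dec x0 0) as [Hx0|Hx0]; destruct (Req_dec y0 0) as [Hy0|Hy0].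
  - left. rewrite HL, Hx0, Hy0. ring.
  - right. exists 0, (y0 / Rpower s (/ (2 * q))).
    assert (Ht := Rpower_gt0 s (/ (2 * q))).
    assert (Ey : y0 = Rpower s (/ (2 * q)) * (y0 / Rpower s (/ (2 * q)))) by (field; lra).
    assert (Ex : x0 = Rpower s (/ (2 * q)) * 0) by (rewrite Hx0; ring).
    split.
    + right; left. split; auto. split. apply Rdiv_lt_0_compat; lra.
      assert (H := comp_eq q mu2 beta s (y0 / Rpower s (/ (2 * q))) 0 Hq Hs ltac:(apply Rdiv_lt_0_compat; lra) ltac:(lra)).
      rewrite <- Ey, <- Ex, rpow_0 in H. lra.
    + rewrite HL, <- Lform; auto. rewrite <- Ex, <- Ey. auto.
  - right. exists (x0 / Rpower s (/ (2 * q))), 0.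
    assert (Ht := Rpower_gt0 s (/ (2 * q))).
    assert (Ex : x0 = Rpower s (/ (2 * q)) * (x0 / Rpower s (/ (2 * q)))) by (field; lra).
    assert (Ey : y0 = Rpower s (/ (2 * q)) * 0) by (rewrite Hy0; ring).
    split.
    + right; right. split; auto. split. apply Rdiv_lt_0_compat; lra.
      assert (H := comp_eq q mu1 beta s (x0 / Rpower s (/ (2 * q))) 0 Hq Hs ltac:(apply Rdiv_lt_0_compat; lra) ltac:(lra)).
      rewrite <- Ey, <- Ex, rpow_0 in H. lra.
    + rewrite HL, <- Lform; auto. rewrite <- Ex, <- Ey. auto.
  - right. exists (x0 / Rpower s (/ (2 * q))), (y0 / Rpower s (/ (2 * q))).
    assert (Ht := Rpower_gt0 s (/ (2 * q))).
    assert (Ex : x0 = Rpower s (/ (2 * q)) * (x0 / Rpower s (/ (2 * q)))) by (field; lra).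
    assert (Ey : y0 = Rpower s (/ (2 * q)) * (y0 / Rpower s (/ (2 * q)))) by (field; lra).
    assert (Hk : 0 < x0 / Rpower s (/ (2 * q))) by (apply Rdiv_lt_0_compat; lra).
    assert (Hl : 0 < y0 / Rpower s (/ (2 * q))) by (apply Rdiv_lt_0_compat; lra).
    split.
    + left. split; auto. split; auto. split.
      * assert (H := comp_eq q mu1 beta s _ _ Hq Hs Hk (Rlt_le _ _ Hl)).
        rewrite <- Ey, <- Ex, rpow_pos in H; auto.
      * assert (H := comp_eq q mu2 beta s _ _ Hq Hs Hl (Rlt_le _ _ Hk)).
        rewrite <- Ey, <- Ex, rpow_pos in H; auto.
    + rewrite HL, <- Lform; auto. rewrite <- Ex, <- Ey. auto.
Qed.


Theorem lemma4p6 (n : nat) (mu1 mu2 beta p q : R)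
  (U V dU dV ddU ddV : R -> R)
  (Hn : (3 <= n)%nat)
  (Hmu1 : 0 < mu1) (Hmu2 : 0 < mu2) (Hbeta : 0 < beta)
  (Hp : p = 2 * q + 1)
  (Hplo : INR n / (INR n - 2) < p) (Hphi : p < (INR n + 2) / (INR n - 2))
  (HU0 : forall r, 0 < r -> 0 <= U r) (HV0 : forall r, 0 < r -> 0 <= V r)
  (HdU : forall r, 0 < r -> derivable_pt_lim U r (dU r))
  (HdV : forall r, 0 < r -> derivable_pt_lim V r (dV r))
  (HddU : forall r, 0 < r -> derivable_pt_lim dU r (ddU r))
  (HddV : forall r, 0 < r -> derivable_pt_lim dV r (ddV r))
  (HcU : forall r, 0 < r -> continuity_pt ddU r)
  (HcV : forall r, 0 < r -> continuity_pt ddV r)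
  (HeqU : forall r, 0 < r ->
     - (ddU r + (INR n - 1) / r * dU r)
     = mu1 * rpow (U r) (2 * q + 1) + beta * rpow (U r) q * rpow (V r) (q + 1))
  (HeqV : forall r, 0 < r ->
     - (ddV r + (INR n - 1) / r * dV r)
     = mu2 * rpow (V r) (2 * q + 1) + beta * rpow (V r) q * rpow (U r) (q + 1))
  (dw1 dw2 : R -> R)
  (Hdw1 : forall t, derivable_pt_lim (wbar n p U) t (dw1 t))
  (Hdw2 : forall t, derivable_pt_lim (wbar n p V) t (dw2 t)) :
  exists L : R,
    lim_pinfty (Psibar n p q mu1 mu2 beta (wbar n p U) (wbar n p V) dw1 dw2) L
    /\ (L = 0 \/
        exists k l : R, kl_admissible q mu1 mu2 beta k l /\
          L = - ((p - 1) / (2 * (p + 1))) * (k ^ 2 + l ^ 2)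
                * Rpower (sigma0 n p) ((p + 1) / (p - 1))).
Proof.
  assert (Hn3 : 3 <= INR n) by (replace 3 with (INR 3) by (simpl; ring); apply le_INR; auto).
  assert (Hnp : 0 < INR n - 2) by lra.
  assert (Hp1 : p * (INR n - 2) > INR n).
  { apply Rmult_lt_compat_r with (r := INR n - 2) in Hplo; auto.
    replace (INR n / (INR n - 2) * (INR n - 2)) with (INR n) in Hplo by (field; lra). lra. }
  assert (Hp2 : p * (INR n - 2) < INR n + 2).
  { apply Rmult_lt_compat_r with (r := INR n - 2) in Hphi; auto.
    replace ((INR n + 2) / (INR n - 2) * (INR n - 2)) with (INR n + 2) in Hphi by (field; lra). lra. }
  subst p.
  assert (Hq : 0 < q) by nra.
  assert (Hs1 : / q < INR n - 2).
  { apply Rmult_lt_reg_l with q; auto. rewrite Rinv_r; lra. }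
  assert (Ha1 : INR n - 2 < 2 / q).
  { apply Rmult_lt_reg_l with q; auto. replace (q * (2 / q)) with 2 by (field; lra). lra. }
  set (s := sg n q).
  assert (Hs : 0 < s) by (unfold s, sg; apply Rmult_lt_0_compat; [apply Rinv_0_lt_compat|]; lra).
  assert (Hsig : sigma0 n (2 * q + 1) = s) by (apply sigma_eq; auto).
  assert (Ha : aa n q < 0) by (unfold aa; lra).
  rewrite (wbar_eq n q U Hq), (wbar_eq n q V Hq) in *.
  assert (E1 : dw1 = Df q U dU).
  { apply functional_extensionality; intros t. apply (uniqueness_limite (Wf q U) t); auto. apply W_deriv; auto. }
  assert (E2 : dw2 = Df q V dV).
  { apply functional_extensionality; intros t. apply (uniqueness_limite (Wf q V) t); auto. apply W_deriv; auto. }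
  subst dw1 dw2.
  destruct (decay n q mu1 beta U V dU ddU) as [T1 [B1 [HT1 HB1]]]; auto.
  destruct (decay n q mu2 beta V U dV ddV) as [T2 [B2 [HT2 HB2]]]; auto.
  assert (H3 : forall t, derivable_pt_lim (Df q U dU) t (- aa n q * Df q U dU t + s * Wf q U t - F1 q mu1 beta (Wf q U t) (Wf q V t))).
  { intros t. apply (D_ode n q mu1 beta U V dU ddU t); auto. }
  assert (H4 : forall t, derivable_pt_lim (Df q V dV) t (- aa n q * Df q V dV t + s * Wf q V t - F1 q mu2 beta (Wf q V t) (Wf q U t))).
  { intros t. apply (D_ode n q mu2 beta V U dV ddV t); auto. }
  assert (HB : forall t, Rmax T1 T2 <= t -> 0 <= Wf q U t <= Rmax B1 B2 /\ 0 <= Wf q V t <= Rmax B1 B2).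
  { intros t Ht. assert (A1 := Rmax_l T1 T2). assert (A2 := Rmax_r T1 T2).
    assert (A3 := Rmax_l B1 B2). assert (A4 := Rmax_r B1 B2).
    destruct (HB1 t ltac:(lra)). destruct (HB2 t ltac:(lra)). lra. }
  destruct (analysis n q mu1 mu2 beta s (aa n q) (Wf q U) (Wf q V) (Df q U dU) (Df q V dV) (Rmax T1 T2) (Rmax B1 B2)
    Hq Hmu1 Hmu2 Hbeta Hs Ha Hsig Hdw1 Hdw2 H3 H4 HB)
    as [L [HL [x0 [y0 [Hx0 [Hy0 [Hg1 [Hg2 HLe]]]]]]]].
  exists L. split; auto. subst L.
  apply (final_alg n q mu1 mu2 beta s x0 y0); auto.
Qed.
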